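(* Let $\mathcal{L}_1:\mathcal{M}_{d_1}\to\mathcal{M}_{d_1}$ and $\mathcal{L}_2:\mathcal{M}_{d_2}\to\mathcal{M}_{d_2}$ be unital, reversible Liouvillians with almost commuting unitary eigenbases associated to finite abelian groups $G_1$ and $G_2$, and let $P^1_t$, $P^2_t$ be the associated classical semigroups acting on $V(G_1)$, $V(G_2)$. Then for all $t\geq0$, $$\|e^{t\mathcal{L}_1}\otimes e^{t\mathcal{L}_2}\|_{2\to4,\frac{\mathbb{1}}{d_1d_2}}\leq\|P^1_t\otimes P^2_t\|_{2\to4}.$$
   Context: A Liouvillian generates a semigroup of completely positive trace-preserving maps; unital: $\mathcal{L}(\mathbb{1})=0$; reversible: self-adjoint w.r.t. the Hilbert–Schmidt inner product. An almost commuting unitary eigenbasis of $\mathcal{L}$ on $\mathcal{M}_d$ associated to a finite abelian group $G$ ($|G|=d^2$) consists of unitaries $\{U_i\}_{i\in G}$ with $U_0=\mathbb{1}$, $\mathcal{L}(U_i)=\lambda_iU_i$, $\text{tr}(U_i^\dagger U_j)=d\delta_{ij}$, and $U_iU_j=\phi(i,j)U_jU_i=\phi'(i,j)U_{i+j}$ with unimodular phases. Fix an isomorphism $i\mapsto\chi_i$ of $G$ onto its character group. $V(G)$ = functions $G\to\mathbb{C}$, $\|f\|_p^p=\frac1{|G|}\sum_g|f(g)|^p$, $\hat f(i)=\frac1{|G|}\sum_g\overline{\chi_i(g)}f(g)$; the associated classical semigroup is $P_tf=\sum_i e^{\lambda_it}\hat f(i)\chi_i$. $V(G_1)\otimes V(G_2)\cong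 V(G_1\times G_2)$ with the corresponding norm; $\|A\|_{2\to4}=\sup_{f\ne0}\|Af\|_4/\|f\|_2$. On $\mathcal{M}_D$ ($D=d_1d_2$): $\|Y\|_{p,\frac{\mathbb{1}}{D}}=D^{-1/p}(\text{tr}|Y|^p)^{1/p}$ and $\|S\|_{2\to4,\frac{\mathbb{1}}{D}}=\sup_{X\ne0}\|S(X)\|_{4,\frac{\mathbb{1}}{D}}/\|X\|_{2,\frac{\mathbb{1}}{D}}$. *)

(* Defs.v *)
From HB Require Import structures.
From mathcomp Require Import all_boot all_order all_algebra.
From mathcomp Require Import all_classical all_reals all_analysis.
From mathcomp Require Import complex mxtens.
Set Implicit Arguments. Unset Strict Implicit. Unset Printing Implicit Defensive.
Import Order.TTheory GRing.Theory Num.Theory.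
Import numFieldNormedType.Exports.
Local Open Scope classical_set_scope.
Local Open Scope ring_scope.
Local Open Scope complex_scope.

Section QuantumDefs.
Variable R : realType.
Local Notation C := (R[i]).

Definition cexp (z : C) : C :=
  (expR (complex.Re z))%:C * ((cos (complex.Im z)) +i* (sin (complex.Im z))).

Definition adjmx m n (A : 'M[C]_(m, n)) : 'M[C]_(n, m) := (map_mx conjc A)^T.

Definition hs_inner d (A B : 'M[C]_d) : C := \tr (adjmx A *m B).

Definition is_linear_map d (S : 'M[C]_d -> 'M[C]_d) :=
  forall (a : C) (X Y : 'M[C]_d), S (a *: X + Y) = a *: S X + S Y.

(* positive semidefinite: v^* A v >= 0 for all v (in C, "0 <= z" means z real
   and nonnegative) *)
Definition psd n (A : 'M[C]_n) := forall v : 'cV[C]_n, 0 <= (adjmx v *m A *m v) 0 0.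

(* tensor product S (x) T of superoperators, acting on M_{d1 d2} = M_{d1} (x) M_{d2}
   (Kronecker convention of mxtens: index (i1,i2) |-> i1 * d2 + i2) *)
Definition suptens d1 d2 (S : 'M[C]_d1 -> 'M[C]_d1) (T : 'M[C]_d2 -> 'M[C]_d2)
  (X : 'M[C]_(d1 * d2)) : 'M[C]_(d1 * d2) :=
  \sum_(a < d1) \sum_(b < d1) \sum_(c < d2) \sum_(e < d2)
     X (mxtens_index (a, c)) (mxtens_index (b, e))
       *: (S (delta_mx a b) *t T (delta_mx c e)).

Definition completely_positive d (S : 'M[C]_d -> 'M[C]_d) :=
  forall (k : nat) (X : 'M[C]_(k * d)),
    psd X -> psd (suptens (fun Y : 'M[C]_k => Y) S X).

Definition trace_preserving d (S : 'M[C]_d -> 'M[C]_d) :=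
  forall X : 'M[C]_d, \tr (S X) = \tr X.

Definition exp_partial d (L : 'M[C]_d -> 'M[C]_d) (t : R) (N : nat) (X : 'M[C]_d)
  : 'M[C]_d :=
  \sum_(k < N) ((t ^+ k / (k`!)%:R)%:C) *: iter k L X.

Definition expL d (L : 'M[C]_d -> 'M[C]_d) (t : R) (X : 'M[C]_d) : 'M[C]_d :=
  \matrix_(i, j)
    ((lim ((fun N => complex.Re (exp_partial L t N X i j)) @ \oo))
       +i* (lim ((fun N => complex.Im (exp_partial L t N X i j)) @ \oo))).

Definition liouvillian d (L : 'M[C]_d -> 'M[C]_d) :=
  is_linear_map L /\
  forall t : R, 0 <= t ->
    completely_positive (expL L t) /\ trace_preserving (expL L t).

Definition unital d (L : 'M[C]_d -> 'M[C]_d) := L 1%:M = 0.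

Definition reversible d (L : 'M[C]_d -> 'M[C]_d) :=
  forall X Y : 'M[C]_d, hs_inner X (L Y) = hs_inner (L X) Y.

Definition unitary d (U : 'M[C]_d) :=
  adjmx U *m U = 1%:M /\ U *m adjmx U = 1%:M.

Definition ac_unitary_eigenbasis d (G : finZmodType) (L : 'M[C]_d -> 'M[C]_d)
  (U : G -> 'M[C]_d) (lam : G -> C) :=
  [/\ #|G| = (d * d)%N /\ U 0 = 1%:M,
      (forall i, unitary (U i)),
      (forall i, L (U i) = lam i *: U i),
      (forall i j, hs_inner (U i) (U j) = (d%:R * (i == j)%:R)) &
      (exists phi phi' : G -> G -> C,
        forall i j, `|phi i j| = 1 /\ `|phi' i j| = 1 /\
          U i *m U j = phi i j *: (U j *m U i) /\
          U i *m U j = phi' i j *: U (i + j))].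

(* normalized Schatten norms on M_D w.r.t. 1/D, for p = 2, 4:
   tr|Y|^2 = tr(Y^* Y), tr|Y|^4 = tr((Y^* Y)^2) *)
Definition qnorm2 D (Y : 'M[C]_D) : R :=
  ((D%:R)^-1 * complex.Re (\tr (adjmx Y *m Y))) `^ (2^-1).
Definition qnorm4 D (Y : 'M[C]_D) : R :=
  ((D%:R)^-1 * complex.Re (\tr ((adjmx Y *m Y) *m (adjmx Y *m Y)))) `^ (4^-1).

Definition qnorm24 D (S : 'M[C]_D -> 'M[C]_D) : \bar R :=
  ereal_sup [set ((qnorm4 (S X) / qnorm2 X)%:E)%E | X in [set X : 'M[C]_D | X != 0]].

Definition is_character (G : finZmodType) (f : G -> C) :=
  (forall g h, f (g + h) = f g * f h) /\ (forall g, f g != 0).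

Definition character_iso (G : finZmodType) (chi : G -> G -> C) :=
  [/\ (forall i, is_character (chi i)),
      (forall i j g, chi (i + j) g = chi i g * chi j g),
      (forall i j, (forall g, chi i g = chi j g) -> i = j) &
      (forall f, is_character f -> exists i, forall g, chi i g = f g)].

Definition fourier (G : finZmodType) (chi : G -> G -> C) (f : G -> C) (i : G) : C :=
  (#|G|%:R)^-1 * \sum_(g : G) conjc (chi i g) * f g.

Definition classical_sg (G : finZmodType) (chi : G -> G -> C) (lam : G -> C)
  (t : R) (f : G -> C) : G -> C :=
  fun g => \sum_(i : G) cexp (lam i * t%:C) * fourier chi f i * chi i g.

(* A (x) B on V(G1) (x) V(G2) = V(G1 x G2) *)
Definition ctens (G1 G2 : finType) (A : (G1 -> C) -> G1 -> C) (B : (G2 -> C) -> G2 -> C)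
  (f : G1 * G2 -> C) : G1 * G2 -> C :=
  fun g => \sum_(h1 : G1) \sum_(h2 : G2)
    f (h1, h2) * A (fun x => (x == h1)%:R) g.1 * B (fun x => (x == h2)%:R) g.2.

Definition cnorm (G : finType) (p : nat) (f : G -> C) : R :=
  ((#|G|%:R)^-1 * \sum_(g : G) complex.Re (`|f g| ^+ p)) `^ (p%:R^-1).

Definition cnorm24 (G : finType) (A : (G -> C) -> G -> C) : \bar R :=
  ereal_sup [set ((cnorm 4 (A f) / cnorm 2 f)%:E)%E
            | f in [set f : G -> C | f <> (fun=> 0)]].

End QuantumDefs.

(* Main.v *)
Require Import Defs.
From HB Require Import structures.
From mathcomp Require Import all_boot all_order all_algebra.
From mathcomp Require Import all_classical all_reals all_analysis.
From mathcomp Require Import complex mxtens.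
From mathcomp Require Import ring lra.
Import Order.TTheory GRing.Theory Num.Theory.
Import numFieldNormedType.Exports.
Set Implicit Arguments. Unset Strict Implicit. Unset Printing Implicit Defensive.
Local Open Scope ring_scope.
Local Open Scope complex_scope.
Local Open Scope classical_set_scope.

Section MatLemmas.
Variable R : realType.
Local Notation C := (R[i]).

Lemma adjmxM m n p (A : 'M[C]_(m, n)) (B : 'M[C]_(n, p)) :
  adjmx (A *m B) = adjmx B *m adjmx A.
Proof. by rewrite /adjmx map_mxM trmx_mul. Qed.

Lemma adjmxK m n (A : 'M[C]_(m, n)) : adjmx (adjmx A) = A.
Proof. by apply/matrixP => i j; rewrite !mxE conjcK. Qed.

Lemma adjmxZ m n (a : C) (A : 'M[C]_(m, n)) : adjmx (a *: A) = (a^*)%C *: adjmx A.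
Proof. by apply/matrixP => i j; rewrite !mxE rmorphM. Qed.

Lemma adjmxD m n (A B : 'M[C]_(m, n)) : adjmx (A + B) = adjmx A + adjmx B.
Proof. by apply/matrixP => i j; rewrite !mxE rmorphD. Qed.

Lemma adjmx_sum m n (I : finType) (F : I -> 'M[C]_(m, n)) :
  adjmx (\sum_i F i) = \sum_i adjmx (F i).
Proof.
apply/matrixP => i j; rewrite !mxE !summxE rmorph_sum.
by apply: eq_bigr => k _; rewrite !mxE.
Qed.

Lemma adjmx1 n : adjmx (1%:M : 'M[C]_n) = 1%:M.
Proof. by apply/matrixP => i j; rewrite !mxE conjc_nat eq_sym. Qed.

Lemma adjmx_tens m n p q (A : 'M[C]_(m, n)) (B : 'M[C]_(p, q)) :
  adjmx (A *t B) = adjmx A *t adjmx B.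
Proof. by apply/matrixP => i j; rewrite !mxE rmorphM. Qed.

Lemma tr_tens m n (A : 'M[C]_m) (B : 'M[C]_n) : \tr (A *t B) = \tr A * \tr B.
Proof. by rewrite /mxtrace mulr_sum; apply: eq_bigr => k _; rewrite !mxE. Qed.

Lemma conj_hs d (A B : 'M[C]_d) : ((hs_inner A B)^*)%C = hs_inner B A.
Proof.
rewrite /hs_inner /mxtrace rmorph_sum.
under eq_bigr do rewrite !mxE rmorph_sum.
apply: eq_bigr => i _; rewrite mxE; apply: eq_bigr => j _.
by rewrite !mxE rmorphM /= conjcK mulrC.
Qed.

Lemma hs_tens m n (A B : 'M[C]_m) (A' B' : 'M[C]_n) :
  hs_inner (A *t A') (B *t B') = hs_inner A B * hs_inner A' B'.
Proof. by rewrite /hs_inner adjmx_tens tensmx_mul tr_tens. Qed.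

Lemma hs_sumr d (I : finType) (A : 'M[C]_d) (c : I -> C) (F : I -> 'M[C]_d) :
  hs_inner A (\sum_i c i *: F i) = \sum_i c i * hs_inner A (F i).
Proof.
rewrite /hs_inner mulmx_sumr raddf_sum; apply: eq_bigr => i _.
by rewrite /= -scalemxAr mxtraceZ.
Qed.

Lemma hs_suml d (I : finType) (A : 'M[C]_d) (c : I -> C) (F : I -> 'M[C]_d) :
  hs_inner (\sum_i c i *: F i) A = \sum_i (c i)^*%C * hs_inner (F i) A.
Proof.
rewrite -conj_hs hs_sumr rmorph_sum; apply: eq_bigr => i _.
by rewrite rmorphM /= conj_hs.
Qed.

Lemma hs_self_ge0 d (A : 'M[C]_d) : 0 <= hs_inner A A.
Proof.
rewrite /hs_inner /mxtrace; apply: sumr_ge0 => i _; rewrite mxE.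
apply: sumr_ge0 => j _; rewrite !mxE mulrC; exact: mulcJ_ge0.
Qed.

Lemma tr_delta d (A : 'M[C]_d) a b : hs_inner A (delta_mx a b) = (A a b)^*%C.
Proof.
rewrite /hs_inner /mxtrace (bigD1 b) //= big1 ?addr0.
  rewrite mxE (bigD1 a) //= big1 ?addr0; first by rewrite !mxE !eqxx mulr1.
  by move=> k /negbTE kb; rewrite !mxE kb mulr0.
move=> k /negbTE kb; rewrite mxE big1 // => l _; rewrite !mxE kb.
by rewrite andbF mulr0.
Qed.

Lemma sum_tens_index m n (F : 'I_(m * n) -> C) :
  \sum_(k < m * n) F k = \sum_(a < m) \sum_(c < n) F (mxtens_index (a, c)).
Proof.
rewrite pair_big /= (reindex (@mxtens_index m n)) /=.
  by apply: eq_bigr => -[a c] _.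
by exists (@mxtens_unindex m n) => x _; rewrite (mxtens_indexK, mxtens_unindexK).
Qed.

Lemma tensmxZl m n p q (a : C) (A : 'M[C]_(m, n)) (B : 'M[C]_(p, q)) :
  (a *: A) *t B = a *: (A *t B).
Proof. by apply/matrixP => i j; rewrite !mxE mulrA. Qed.

Lemma tensmxZr m n p q (a : C) (A : 'M[C]_(m, n)) (B : 'M[C]_(p, q)) :
  A *t (a *: B) = a *: (A *t B).
Proof. by apply/matrixP => i j; rewrite !mxE mulrCA. Qed.

Lemma tensmx_suml m n p q (I : finType) (F : I -> 'M[C]_(m, n)) (B : 'M[C]_(p, q)) :
  (\sum_i F i) *t B = \sum_i (F i *t B).
Proof.
apply/matrixP => i j; rewrite !mxE !summxE mulr_suml.
by apply: eq_bigr => k _; rewrite !mxE.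
Qed.

Lemma tensmx_sumr m n p q (I : finType) (A : 'M[C]_(m, n)) (F : I -> 'M[C]_(p, q)) :
  A *t (\sum_i F i) = \sum_i (A *t F i).
Proof.
apply/matrixP => i j; rewrite !mxE !summxE mulr_sumr.
by apply: eq_bigr => k _; rewrite !mxE.
Qed.

End MatLemmas.


Section CLemmas.
Variable R : realType.
Local Notation C := (R[i]).

Lemma hsZr d (A B : 'M[C]_d) (a : C) : hs_inner A (a *: B) = a * hs_inner A B.
Proof. by rewrite /hs_inner -scalemxAr mxtraceZ. Qed.

Lemma hsZl d (A B : 'M[C]_d) (a : C) : hs_inner (a *: A) B = (a^*)%C * hs_inner A B.
Proof. by rewrite /hs_inner adjmxZ -scalemxAl mxtraceZ. Qed.

Lemma conj_real_eq (z : C) : (z^*)%C = z -> z = (complex.Re z)%:C.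
Proof.
case: z => a b /= [] Hb; congr (_ +i* _); lra.
Qed.

Lemma ReM_realr (z : C) (a : R) : complex.Re (z * a%:C) = complex.Re z * a.
Proof. by case: z => x y /=; rewrite !mulr0 subr0. Qed.

Lemma ImM_realr (z : C) (a : R) : complex.Im (z * a%:C) = complex.Im z * a.
Proof. by case: z => x y /=; rewrite !mulr0 add0r. Qed.

Lemma Re_sum (I : Type) (r : seq I) (P : pred I) (F : I -> C) :
  complex.Re (\sum_(i <- r | P i) F i) = \sum_(i <- r | P i) complex.Re (F i).
Proof.
elim: r => [|x r IH]; rewrite ?big_nil ?big_cons //; case: (P x) => //.
by rewrite -IH; case: (F x) => ? ?; case: (\sum_(j <- r | P j) F j).
Qed.

Lemma Im_sum (I : Type) (r : seq I) (P : pred I) (F : I -> C) :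
  complex.Im (\sum_(i <- r | P i) F i) = \sum_(i <- r | P i) complex.Im (F i).
Proof.
elim: r => [|x r IH]; rewrite ?big_nil ?big_cons //; case: (P x) => //.
by rewrite -IH; case: (F x) => ? ?; case: (\sum_(j <- r | P j) F j).
Qed.

Lemma series_expR (x : R) : series (exp_coeff x) @ \oo --> expR x.
Proof. exact: is_cvg_series_exp_coeff. Qed.

End CLemmas.

Section Family.
Variables (R : realType) (d : nat) (G : finZmodType).
Local Notation C := (R[i]).
Variables (L : 'M[C]_d -> 'M[C]_d) (U : G -> 'M[C]_d) (lam : G -> C).
Hypotheses (HL : liouvillian L) (Hrev : reversible L)
  (HU : ac_unitary_eigenbasis L U lam).

Lemma fam_card : #|G| = (d * d)%N.
Proof. by case: HU => -[]. Qed.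

Lemma fam_U0 : U 0 = 1%:M.
Proof. by case: HU => -[]. Qed.

Lemma fam_unitary i : unitary (U i).
Proof. by case: HU => _ H. Qed.

Lemma fam_eig i : L (U i) = lam i *: U i.
Proof. by case: HU => _ _ H. Qed.

Lemma fam_orth i j : hs_inner (U i) (U j) = d%:R * (i == j)%:R.
Proof. by case: HU => _ _ _ H. Qed.

Lemma fam_d_gt0 : (0 < d)%N.
Proof.
have : (0 < #|G|)%N by apply/card_gt0P; exists 0.
by rewrite fam_card muln_gt0 andbb.
Qed.

Lemma fam_d_neq0 : (d%:R : C) != 0.
Proof. by rewrite pnatr_eq0 -lt0n fam_d_gt0. Qed.

Lemma fam_lam_real i : lam i = (complex.Re (lam i))%:C.
Proof.
apply: conj_real_eq.
have := Hrev (U i) (U i); rewrite fam_eig hsZr hsZl fam_orth eqxx mulr1.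
by move/(mulIf fam_d_neq0)/esym.
Qed.

Lemma fam_tr k : \tr (U k) = d%:R * (k == 0)%:R.
Proof.
have := fam_orth 0 k; rewrite /hs_inner fam_U0 adjmx1 mul1mx => ->.
by rewrite eq_sym.
Qed.

Lemma fam_adjmul a b : exists p : C, `|p| = 1 /\ adjmx (U a) *m U b = p *: U (b - a).
Proof.
case: HU => _ _ _ _ [phi [phi' Hphi]].
have [_ [Hp1 [_ Hm]]] := Hphi a (b - a).
rewrite [a + _]addrC subrK in Hm.
have Hp0 : phi' a (b - a) != 0 by rewrite -normr_eq0 Hp1 oner_eq0.
exists (phi' a (b - a))^-1; split; first by rewrite normfV Hp1 invr1.
have := congr1 (mulmx (adjmx (U a))) Hm.
rewrite mulmxA (proj1 (fam_unitary a)) mul1mx -scalemxAr => ->.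
by rewrite scalerA mulVf // scale1r.
Qed.

Lemma fam_mul a b : exists p : C, `|p| = 1 /\ U a *m U b = p *: U (a + b).
Proof.
case: HU => _ _ _ _ [phi [phi' Hphi]].
have [_ [Hp1 [_ Hm]]] := Hphi a b.
by exists (phi' a b).
Qed.

Lemma fam_tr4 a b c e :
  `|\tr (adjmx (U a) *m U b *m (adjmx (U c) *m U e))| =
    d%:R * ((b - a + (e - c) == 0)%:R).
Proof.
have [p [Hp ->]] := fam_adjmul a b.
have [q [Hq ->]] := fam_adjmul c e.
rewrite -scalemxAl -scalemxAr.
have [r [Hr ->]] := fam_mul (b - a) (e - c).
rewrite !mxtraceZ fam_tr !normrM Hp Hq Hr !mul1r normr_nat.
by case: eqP; rewrite ?normr1 ?normr0.
Qed.

End Family.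


Section Family2.
Variables (R : realType) (d : nat) (G : finZmodType).
Local Notation C := (R[i]).
Variables (L : 'M[C]_d -> 'M[C]_d) (U : G -> 'M[C]_d) (lam : G -> C).
Hypotheses (HL : liouvillian L) (Hrev : reversible L)
  (HU : ac_unitary_eigenbasis L U lam).

Lemma fam_complete a b c e :
  \sum_(x : G) (U x a b)^* * U x c e = d%:R * ((a == c) && (b == e))%:R.
Proof.
pose n := (d * d)%N.
have Hc : #|G| = n := fam_card HU.
pose g (k : 'I_n) : G := enum_val (cast_ord (esym Hc) k).
pose h (x : G) : 'I_n := cast_ord Hc (enum_rank x).
have gK : cancel g h by move=> k; rewrite /g /h enum_valK cast_ordKV.
have hK : cancel h g by move=> x; rewrite /g /h cast_ordK enum_rankK.
pose M : 'M[C]_n := \matrix_(k, p) U (g k) (mxtens_unindex p).1 (mxtens_unindex p).2.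
have HM : M *m ((d%:R)^-1 *: adjmx M) = 1%:M.
  apply/matrixP => k l; rewrite -scalemxAr !mxE.
  transitivity ((d%:R)^-1 * hs_inner (U (g l)) (U (g k))).
    congr (_ * _); rewrite /hs_inner /mxtrace sum_tens_index exchange_big /=.
    apply: eq_bigr => a' _; rewrite mxE; apply: eq_bigr => c' _.
    by rewrite !mxE mxtens_indexK mulrC.
  rewrite (fam_orth HU) (inj_eq (can_inj gK)) mulrA mulVf ?mul1r ?(fam_d_neq0 HU) //.
  by rewrite eq_sym.
have HM' := mulmx1C HM.
have := congr1 (fun A : 'M[C]_n => A (mxtens_index (a, b)) (mxtens_index (c, e))) HM'.
rewrite /= -scalemxAl !mxE (inj_eq (can_inj (@mxtens_indexK d d))) xpair_eqE.
move=> H; rewrite -H mulrA mulfV ?mul1r ?(fam_d_neq0 HU) //.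
rewrite (reindex g) /=; last by exists h => x _; rewrite (gK, hK).
by apply: eq_bigr => k _; rewrite !mxE !mxtens_indexK.
Qed.

Lemma fam_delta a b :
  delta_mx a b = \sum_x ((d%:R)^-1 * (U x a b)^*) *: U x.
Proof.
apply/matrixP => c e; rewrite summxE mxE.
under eq_bigr do rewrite mxE -mulrA.
rewrite -mulr_sumr fam_complete mulrA mulVf ?mul1r ?(fam_d_neq0 HU) //.
by rewrite (eq_sym a) (eq_sym b).
Qed.

Lemma L_lin a X Y : L (a *: X + Y) = a *: L X + L Y.
Proof. by case: HL => H _; apply: H. Qed.

Lemma L0 : L 0 = 0.
Proof.
have := L_lin 1 0 0; rewrite !scale1r !addr0 => H.
by apply: (addrI (L 0)); rewrite addr0 -H.
Qed.

Lemma L_seq (s : seq G) (c : G -> C) :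
  L (\sum_(x <- s) c x *: U x) = \sum_(x <- s) (c x * lam x) *: U x.
Proof.
elim: s => [|x s IH]; first by rewrite !big_nil L0.
by rewrite !big_cons L_lin IH (fam_eig HU) scalerA.
Qed.

Lemma L_sum (c : G -> C) :
  L (\sum_x c x *: U x) = \sum_x (c x * lam x) *: U x.
Proof. exact: L_seq. Qed.

Lemma L_iter k (c : G -> C) :
  iter k L (\sum_x c x *: U x) = \sum_x (c x * lam x ^+ k) *: U x.
Proof.
elim: k => [|k IH] /=; first by apply: eq_bigr => x _; rewrite expr0 mulr1.
by rewrite IH L_sum; apply: eq_bigr => x _; rewrite exprSr mulrA.
Qed.

Lemma exp_partial_sum t N (c : G -> C) :
  exp_partial L t N (\sum_x c x *: U x) =
  \sum_x (c x * (series (exp_coeff (complex.Re (lam x) * t)) N)%:C) *: U x.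
Proof.
rewrite /exp_partial.
under eq_bigr do rewrite L_iter scaler_sumr.
rewrite exchange_big /=; apply: eq_bigr => x _.
under eq_bigr do rewrite scalerA.
rewrite -scaler_suml; congr (_ *: _).
rewrite /series /= big_mkord rmorph_sum mulr_sumr; apply: eq_bigr => k _.
rewrite [lam x](fam_lam_real Hrev HU) /exp_coeff /=.
rewrite -rmorphXn.
set r := complex.Re (lam x).
rewrite [X in _ = _ * X](_ : _ = ((t ^+ k / k`!%:R)%:C * (r ^+ k)%:C)).
  by rewrite mulrCA.
by rewrite -rmorphM /= exprMn; congr (_ %:C); ring.
Qed.

Lemma cvg_sum_series (a : G -> R) (r : G -> R) :
  (fun N => \sum_x a x * series (exp_coeff (r x)) N) @ \oo -->
  \sum_x a x * expR (r x).
Proof.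
apply: (cvg_big (@add_continuous R)) => x _.
apply: cvgMl_tmp; exact: series_expR.
Qed.

Lemma expL_sum t (c : G -> C) :
  expL L t (\sum_x c x *: U x) =
  \sum_x (c x * (expR (complex.Re (lam x) * t))%:C) *: U x.
Proof.
apply/matrixP => i j; rewrite mxE summxE.
under [in RHS]eq_bigr do rewrite mxE.
have -> : (fun N => complex.Re (exp_partial L t N (\sum_x c x *: U x) i j)) =
  (fun N => \sum_x complex.Re (c x * U x i j) *
      series (exp_coeff (complex.Re (lam x) * t)) N).
  apply: funext => N; rewrite exp_partial_sum summxE Re_sum.
  by apply: eq_bigr => x _; rewrite mxE mulrAC ReM_realr.
have -> : (fun N => complex.Im (exp_partial L t N (\sum_x c x *: U x) i j)) =
  (fun N => \sum_x complex.Im (c x * U x i j) *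
      series (exp_coeff (complex.Re (lam x) * t)) N).
  apply: funext => N; rewrite exp_partial_sum summxE Im_sum.
  by apply: eq_bigr => x _; rewrite mxE mulrAC ImM_realr.
have H1 := @cvg_sum_series (fun x => complex.Re (c x * U x i j))
  (fun x => complex.Re (lam x) * t).
have H2 := @cvg_sum_series (fun x => complex.Im (c x * U x i j))
  (fun x => complex.Re (lam x) * t).
rewrite (cvg_lim (@Rhausdorff R) H1) (cvg_lim (@Rhausdorff R) H2).
apply/eqP; rewrite eq_complex /= Re_sum Im_sum; apply/andP; split; apply/eqP.
  by apply: eq_bigr => x _; rewrite mulrAC ReM_realr.
by apply: eq_bigr => x _; rewrite mulrAC ImM_realr.
Qed.

End Family2.


Lemma pull2 (V : nmodType) (I J K : finType) (F : I -> J -> K -> V) :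
  \sum_i \sum_j \sum_k F i j k = \sum_j \sum_k \sum_i F i j k.
Proof.
rewrite exchange_big; apply: eq_bigr => j _; exact: exchange_big.
Qed.

Section Expdelta.
Variables (R : realType) (d : nat) (G : finZmodType).
Local Notation C := (R[i]).
Variables (L : 'M[C]_d -> 'M[C]_d) (U : G -> 'M[C]_d) (lam : G -> C).
Hypotheses (HL : liouvillian L) (Hrev : reversible L)
  (HU : ac_unitary_eigenbasis L U lam).

Lemma expL_delta t a b :
  expL L t (delta_mx a b) =
  \sum_x ((d%:R)^-1 * (U x a b)^* * (expR (complex.Re (lam x) * t))%:C) *: U x.
Proof. by rewrite (fam_delta HU) (expL_sum HL Hrev HU). Qed.

End Expdelta.

Section Tensor.
Variables (R : realType) (d1 d2 : nat) (G1 G2 : finZmodType).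
Local Notation C := (R[i]).
Variables (L1 : 'M[C]_d1 -> 'M[C]_d1) (U1 : G1 -> 'M[C]_d1) (lam1 : G1 -> C).
Variables (L2 : 'M[C]_d2 -> 'M[C]_d2) (U2 : G2 -> 'M[C]_d2) (lam2 : G2 -> C).
Hypotheses (HL1 : liouvillian L1) (Hrev1 : reversible L1)
  (HU1 : ac_unitary_eigenbasis L1 U1 lam1).
Hypotheses (HL2 : liouvillian L2) (Hrev2 : reversible L2)
  (HU2 : ac_unitary_eigenbasis L2 U2 lam2).
Variable t : R.
Let E1 x := (expR (complex.Re (lam1 x) * t))%:C.
Let E2 y := (expR (complex.Re (lam2 y) * t))%:C.

Lemma suptens_formula (X : 'M[C]_(d1 * d2)) :
  suptens (expL L1 t) (expL L2 t) X =
  \sum_x \sum_y (E1 x * E2 y * (hs_inner (U1 x *t U2 y) X / (d1 * d2)%:R))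
     *: (U1 x *t U2 y).
Proof.
rewrite /suptens.
have H : forall a b c e,
  X (mxtens_index (a, c)) (mxtens_index (b, e)) *: (expL L1 t (delta_mx a b) *t expL L2 t (delta_mx c e))
  = \sum_x \sum_y (X (mxtens_index (a, c)) (mxtens_index (b, e)) *
       ((d1%:R)^-1 * (U1 x a b)^* * E1 x) * ((d2%:R)^-1 * (U2 y c e)^* * E2 y))
       *: (U1 x *t U2 y).
  move=> a b c e; rewrite (expL_delta HL1 Hrev1 HU1) (expL_delta HL2 Hrev2 HU2).
  rewrite tensmx_suml scaler_sumr; apply: eq_bigr => x _.
  rewrite tensmx_sumr scaler_sumr; apply: eq_bigr => y _.
  by rewrite tensmxZl tensmxZr !scalerA mulrA.
under eq_bigr do under eq_bigr do under eq_bigr do under eq_bigr do rewrite H.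
under eq_bigr do under eq_bigr do under eq_bigr do rewrite pull2.
under eq_bigr do under eq_bigr do rewrite pull2.
under eq_bigr do rewrite pull2.
rewrite pull2; apply: eq_bigr => x _; apply: eq_bigr => y _.
under eq_bigr do under eq_bigr do under eq_bigr do rewrite -scaler_suml.
under eq_bigr do under eq_bigr do rewrite -scaler_suml.
under eq_bigr do rewrite -scaler_suml.
rewrite -scaler_suml; congr (_ *: _).
rewrite /hs_inner /mxtrace sum_tens_index.
under [in RHS]eq_bigr do under eq_bigr do rewrite mxE sum_tens_index.
rewrite mulr_suml mulr_sumr.
under [in RHS]eq_bigr do rewrite mulr_suml mulr_sumr.
under [in RHS]eq_bigr do under eq_bigr do rewrite mulr_suml mulr_sumr.
under [in RHS]eq_bigr do under eq_bigr do under eq_bigr do rewrite mulr_suml mulr_sumr.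
under [in RHS]eq_bigr do rewrite exchange_big.
rewrite [in RHS]exchange_big.
under [in RHS]eq_bigr do under eq_bigr do rewrite exchange_big.
apply: eq_bigr => a _; apply: eq_bigr => b _; apply: eq_bigr => c _; apply: eq_bigr => e _.
rewrite !mxE !mxtens_indexK /= rmorphM natrM invfM /=.
ring.
Qed.
End Tensor.


Section HS.
Variable R : realType.
Local Notation C := (R[i]).

Lemma hsDl d (A B X : 'M[C]_d) : hs_inner (A + B) X = hs_inner A X + hs_inner B X.
Proof. by rewrite /hs_inner adjmxD mulmxDl mxtraceD. Qed.

Lemma hsDr d (A B X : 'M[C]_d) : hs_inner X (A + B) = hs_inner X A + hs_inner X B.
Proof. by rewrite /hs_inner mulmxDr mxtraceD. Qed.

Lemma hsNl d (A X : 'M[C]_d) : hs_inner (- A) X = - hs_inner A X.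
Proof. by rewrite -scaleN1r hsZl rmorphN1 mulN1r. Qed.

Lemma hsNr d (A X : 'M[C]_d) : hs_inner X (- A) = - hs_inner X A.
Proof. by rewrite -scaleN1r hsZr mulN1r. Qed.

Lemma sum_eq_pick (G : finType) (f : G -> C) (a : G) :
  \sum_b f b * (b == a)%:R = f a.
Proof.
rewrite (bigD1 a) //= eqxx mulr1 big1 ?addr0 // => b /negbTE ->.
by rewrite mulr0.
Qed.

End HS.

Section GenQ.
Variables (R : realType) (D : nat) (G : finZmodType).
Local Notation C := (R[i]).
Variable W : G -> 'M[C]_D.
Hypothesis Horth : forall a b, hs_inner (W a) (W b) = D%:R * (a == b)%:R.
Hypothesis HT : forall a b c e,
  `|\tr (adjmx (W a) *m W b *m (adjmx (W c) *m W e))| <=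
    D%:R * ((b - a + (e - c) == 0)%:R).
Hypothesis HD : (0 < D)%N.

Lemma HDn : (D%:R : C) != 0.
Proof. by rewrite pnatr_eq0 -lt0n. Qed.

Lemma bessel X :
  D%:R * \sum_k `|hs_inner (W k) X / D%:R| ^+ 2 <= hs_inner X X.
Proof.
set x := fun k => hs_inner (W k) X / D%:R.
have Hx k : hs_inner (W k) X = D%:R * x k by rewrite /x mulrC divfK // HDn.
set S := \sum_k x k *: W k.
have H1 : hs_inner X S = D%:R * \sum_k `|x k| ^+ 2.
  rewrite hs_sumr mulr_sumr; apply: eq_bigr => k _.
  by rewrite -conj_hs Hx rmorphM /= conjc_nat sqr_normc mulrCA.
have H2 : hs_inner S X = D%:R * \sum_k `|x k| ^+ 2.
  rewrite hs_suml mulr_sumr; apply: eq_bigr => k _.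
  by rewrite Hx sqr_normc; ring.
have H3 : hs_inner S S = D%:R * \sum_k `|x k| ^+ 2.
  rewrite hs_suml mulr_sumr; apply: eq_bigr => k _.
  rewrite hs_sumr.
  under eq_bigr do rewrite Horth.
  rewrite (bigD1 k) //= eqxx big1 ?addr0; first by rewrite /= mulr1n mulr1 sqr_normc; ring.
  by move=> l /negbTE; rewrite eq_sym => ->; rewrite mulr0 mulr0.
have := hs_self_ge0 (X - S).
rewrite hsDl !hsDr !hsNl !hsNr H1 H2 H3 opprK.
by rewrite addNr addr0 subr_ge0.
Qed.

Lemma ler_norm_sum4 (I J K M : finType) (F : I -> J -> K -> M -> C) :
  `|\sum_a \sum_b \sum_c \sum_e F a b c e| <=
    \sum_a \sum_b \sum_c \sum_e `|F a b c e|.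
Proof.
apply: le_trans (ler_norm_sum _ _ _) _; apply: ler_sum => a _.
apply: le_trans (ler_norm_sum _ _ _) _; apply: ler_sum => b _.
apply: le_trans (ler_norm_sum _ _ _) _; apply: ler_sum => c _.
exact: ler_norm_sum.
Qed.

Lemma q4_bound (y : G -> C) :
  let Y := \sum_k y k *: W k in
  `|\tr ((adjmx Y *m Y) *m (adjmx Y *m Y))| <=
  D%:R * \sum_a \sum_b \sum_c \sum_e
     ((b - a + (e - c) == 0)%:R * (`|y a| * `|y b| * `|y c| * `|y e|)).
Proof.
rewrite /=; set Y := \sum_k y k *: W k.
have HP : adjmx Y *m Y = \sum_a \sum_b ((y a)^* * y b) *: (adjmx (W a) *m W b).
  rewrite /Y adjmx_sum mulmx_suml; apply: eq_bigr => a _.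
  rewrite mulmx_sumr; apply: eq_bigr => b _.
  by rewrite adjmxZ -scalemxAl -scalemxAr scalerA.
have Htr : \tr ((adjmx Y *m Y) *m (adjmx Y *m Y)) =
  \sum_a \sum_b \sum_c \sum_e
    \tr ((((y a)^* * y b) *: (adjmx (W a) *m W b)) *m
         (((y c)^* * y e) *: (adjmx (W c) *m W e))).
  rewrite HP mulmx_suml raddf_sum; apply: eq_bigr => a _.
  rewrite mulmx_suml raddf_sum; apply: eq_bigr => b _.
  rewrite mulmx_sumr raddf_sum; apply: eq_bigr => c _.
  by rewrite mulmx_sumr raddf_sum.
rewrite Htr.
apply: le_trans (ler_norm_sum4 _) _.
rewrite mulr_sumr; apply: ler_sum => a _.
rewrite mulr_sumr; apply: ler_sum => b _.
rewrite mulr_sumr; apply: ler_sum => c _.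
rewrite mulr_sumr; apply: ler_sum => e _.
rewrite -scalemxAl -scalemxAr scalerA /= mxtraceZ normrM.
rewrite !normrM /= !normcJ.
rewrite [X in X <= _]mulrC !mulrA.
do 4! (apply: ler_wpM2r; first exact: normr_ge0).
exact: HT.
Qed.

End GenQ.


Section GenC.
Variables (R : realType) (G : finZmodType).
Local Notation C := (R[i]).
Variable chi : G -> G -> C.
Hypothesis Hmul : forall k l g, chi (k + l) g = chi k g * chi l g.
Hypothesis Hconj : forall k g, (chi k g)^* = chi (- k) g.
Hypothesis Hsum : forall k, \sum_g chi k g = #|G|%:R * (k == 0)%:R.

Lemma sqr_F (z : G -> C) g :
  `|\sum_k z k * chi k g| ^+ 2 = \sum_a \sum_b ((z a)^* * z b) * chi (b - a) g.
Proof.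
rewrite sqr_normc mulrC rmorph_sum mulr_suml; apply: eq_bigr => a _.
rewrite mulr_sumr; apply: eq_bigr => b _.
by rewrite rmorphM /= Hconj [b - a]addrC Hmul; ring.
Qed.

Lemma four_norm (z : G -> C) :
  \sum_g `|\sum_k z k * chi k g| ^+ 4 =
  #|G|%:R * \sum_a \sum_b \sum_c \sum_e
     ((b - a + (e - c) == 0)%:R * ((z a)^* * z b * (z c)^* * z e)).
Proof.
have H g : `|\sum_k z k * chi k g| ^+ 4 =
    \sum_a \sum_b \sum_c \sum_e ((z a)^* * z b * (z c)^* * z e) * chi (b - a + (e - c)) g.
  rewrite (_ : 4 = 2 * 2)%N // exprM sqr_F expr2 mulr_suml; apply: eq_bigr => a _.
  rewrite mulr_suml; apply: eq_bigr => b _.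
  rewrite mulr_sumr; apply: eq_bigr => c _.
  rewrite mulr_sumr; apply: eq_bigr => e _.
  by rewrite (Hmul (b - a) (e - c)); ring.
under eq_bigr do rewrite H.
rewrite exchange_big mulr_sumr; apply: eq_bigr => a _.
rewrite exchange_big mulr_sumr; apply: eq_bigr => b _.
rewrite exchange_big mulr_sumr; apply: eq_bigr => c _.
rewrite exchange_big mulr_sumr; apply: eq_bigr => e _.
by rewrite -mulr_sumr Hsum; ring.
Qed.

Lemma two_norm (z : G -> C) :
  \sum_g `|\sum_k z k * chi k g| ^+ 2 = #|G|%:R * \sum_k `|z k| ^+ 2.
Proof.
under eq_bigr do rewrite sqr_F.
rewrite exchange_big mulr_sumr; apply: eq_bigr => a _.
rewrite exchange_big /=.
under eq_bigr do rewrite -mulr_sumr Hsum subr_eq0 mulrA.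
rewrite sum_eq_pick sqr_normc; ring.
Qed.

Lemma fourier_F (z : G -> C) k :
  \sum_g (\sum_l z l * chi l g) * chi (- k) g = #|G|%:R * z k.
Proof.
under eq_bigr do rewrite mulr_suml.
rewrite exchange_big /=.
under eq_bigr do (under eq_bigr do rewrite -mulrA -Hmul; rewrite -mulr_sumr Hsum subr_eq0 mulrCA).
by rewrite -mulr_sumr sum_eq_pick.
Qed.

End GenC.

Section Chars.
Variables (R : realType) (G : finZmodType).
Local Notation C := (R[i]).
Variable chi : G -> G -> C.
Hypothesis Hchi : character_iso chi.

Lemma ch_mul k l g : chi (k + l) g = chi k g * chi l g.
Proof. by case: Hchi. Qed.

Lemma ch_hom k g h : chi k (g + h) = chi k g * chi k h.
Proof. by case: Hchi => H _ _ _; case: (H k). Qed.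

Lemma ch_neq0 k g : chi k g != 0.
Proof. by case: Hchi => H _ _ _; case: (H k). Qed.

Lemma ch_0l g : chi 0 g = 1.
Proof.
have := ch_mul 0 0 g; rewrite addr0 => H.
by apply: (mulfI (ch_neq0 0 g)); rewrite -H mulr1.
Qed.

Lemma ch_norm k g : `|chi k g| = 1.
Proof.
have HP : \prod_h chi k h = (\prod_h chi k h) * chi k g ^+ #|G|.
  rewrite {1}(reindex_inj (addIr g)) /=.
  under eq_bigr do rewrite ch_hom.
  by rewrite big_split /= prodr_const.
have HP0 : \prod_h chi k h != 0.
  by apply/prodf_neq0 => x _; exact: ch_neq0.
have H1 : chi k g ^+ #|G| = 1.
  by apply: (mulfI HP0); rewrite mulr1 -HP.
have Hc : (0 < #|G|)%N by apply/card_gt0P; exists 0.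
apply/eqP; rewrite -(pexpr_eq1 Hc (normr_ge0 _)) -normrX H1 normr1 //.
Qed.

Lemma ch_conj k g : (chi k g)^* = chi (- k) g.
Proof.
apply: (mulIf (ch_neq0 k g)).
rewrite -ch_mul addNr ch_0l mulrC -sqr_normc ch_norm expr1n //.
Qed.

Lemma ch_sum k : \sum_g chi k g = #|G|%:R * (k == 0)%:R.
Proof.
have [->|k0] := eqVneq k 0.
  under eq_bigr do rewrite ch_0l.
  by rewrite sumr_const /= mulr1n mulr1.
case: (boolP [exists h, chi k h != 1]) => [/existsP [h Hh]| /existsPn H]; last first.
  case: Hchi => _ _ Hinj _; have k0' : k = 0.
    by apply: Hinj => g; rewrite ch_0l; apply/eqP/negPn/H.
  by rewrite k0' eqxx in k0.
have HS : \sum_g chi k g = chi k h * \sum_g chi k g.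
  rewrite {1}(reindex_inj (addIr h)) /= mulr_sumr; apply: eq_bigr => g _.
  by rewrite ch_hom mulrC.
rewrite /= mulr0.
apply/eqP; have : (1 - chi k h) * \sum_g chi k g == 0.
  by rewrite mulrBl mul1r -HS subrr.
by rewrite mulf_eq0 subr_eq0 eq_sym (negbTE Hh).
Qed.

End Chars.


Definition GG (G1 G2 : finZmodType) := (G1 * G2)%type.
HB.instance Definition _ (G1 G2 : finZmodType) := GRing.Zmodule.on (GG G1 G2).
HB.instance Definition _ (G1 G2 : finZmodType) := Finite.on (GG G1 G2).

Lemma sum_pair (V : nmodType) (G1 G2 : finZmodType) (F : GG G1 G2 -> V) :
  \sum_(p : GG G1 G2) F p = \sum_a \sum_b F (a, b).
Proof. by rewrite pair_big; apply: eq_bigr => -[a b]. Qed.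

Lemma card_GG (G1 G2 : finZmodType) : #|{: GG G1 G2}| = (#|G1| * #|G2|)%N.
Proof. exact: card_prod. Qed.

Section Prod.
Variables (R : realType) (G1 G2 : finZmodType).
Local Notation C := (R[i]).
Variables (chi1 : G1 -> G1 -> C) (chi2 : G2 -> G2 -> C).
Hypotheses (Hc1 : character_iso chi1) (Hc2 : character_iso chi2).

Definition pchi (k g : GG G1 G2) : C := chi1 k.1 g.1 * chi2 k.2 g.2.

Lemma pchi_mul k l g : pchi (k + l) g = pchi k g * pchi l g.
Proof. by rewrite /pchi /= !ch_mul //; ring. Qed.

Lemma pchi_conj k g : (pchi k g)^* = pchi (- k) g.
Proof. by rewrite /pchi rmorphM /= !ch_conj. Qed.

Lemma pchi_sum k : \sum_g pchi k g = #|{: GG G1 G2}|%:R * (k == 0)%:R.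
Proof.
rewrite sum_pair card_GG natrM.
rewrite /pchi /=.
under eq_bigr do rewrite -mulr_sumr.
rewrite -mulr_suml !ch_sum //.
case: k => k1 k2; rewrite /= xpair_eqE.
by case: (k1 == 0); case: (k2 == 0); rewrite /= ?mulr1 ?mulr0 ?mul0r //; ring.
Qed.

End Prod.


Section TensQ.
Variables (R : realType) (d1 d2 : nat) (G1 G2 : finZmodType).
Local Notation C := (R[i]).
Variables (L1 : 'M[C]_d1 -> 'M[C]_d1) (U1 : G1 -> 'M[C]_d1) (lam1 : G1 -> C).
Variables (L2 : 'M[C]_d2 -> 'M[C]_d2) (U2 : G2 -> 'M[C]_d2) (lam2 : G2 -> C).
Hypotheses (HU1 : ac_unitary_eigenbasis L1 U1 lam1)
  (HU2 : ac_unitary_eigenbasis L2 U2 lam2).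

Definition Wt (k : GG G1 G2) : 'M[C]_(d1 * d2) := U1 k.1 *t U2 k.2.

Lemma Wt_orth a b : hs_inner (Wt a) (Wt b) = (d1 * d2)%:R * (a == b)%:R.
Proof.
rewrite /Wt hs_tens (fam_orth HU1) (fam_orth HU2) natrM.
case: a b => a1 a2 [b1 b2]; rewrite /= xpair_eqE.
by case: (a1 == b1); case: (a2 == b2); rewrite /= ?mulr1 ?mulr0 ?mul0r //; ring.
Qed.

Lemma Wt_tr4 a b c e :
  `|\tr (adjmx (Wt a) *m Wt b *m (adjmx (Wt c) *m Wt e))| <=
    (d1 * d2)%:R * ((b - a + (e - c) == 0)%:R).
Proof.
rewrite /Wt !adjmx_tens !tensmx_mul tr_tens normrM (fam_tr4 HU1) (fam_tr4 HU2) natrM.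
case: a b c e => a1 a2 [b1 b2] [c1 c2] [e1 e2]; rewrite /= xpair_eqE.
by case: (_ == 0); case: (_ == 0); rewrite /= ?mulr1 ?mulr0 ?mul0r ?mulr1n //; ring.
Qed.

End TensQ.


Lemma cexp_real (R : realType) (r : R) : cexp (r%:C) = (expR r)%:C.
Proof.
rewrite /cexp /= cos0 sin0.
by rewrite (_ : (1 +i* 0) = 1) ?mulr1.
Qed.

Section CSG.
Variables (R : realType) (G : finZmodType).
Local Notation C := (R[i]).
Variables (chi : G -> G -> C) (lam : G -> C).
Hypothesis Hlam : forall i, lam i = (complex.Re (lam i))%:C.

Lemma csg_delta t h g :
  classical_sg chi lam t (fun x => (x == h)%:R) g =
  \sum_i (expR (complex.Re (lam i) * t))%:C * ((#|G|%:R)^-1 * (chi i h)^*) * chi i g.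
Proof.
rewrite /classical_sg; apply: eq_bigr => i _.
rewrite /fourier sum_eq_pick Hlam -rmorphM /= cexp_real.
by rewrite (Hlam i).
Qed.

End CSG.

Section CT.
Variables (R : realType) (G1 G2 : finZmodType).
Local Notation C := (R[i]).
Variables (chi1 : G1 -> G1 -> C) (lam1 : G1 -> C).
Variables (chi2 : G2 -> G2 -> C) (lam2 : G2 -> C).
Hypotheses (Hc1 : character_iso chi1) (Hc2 : character_iso chi2).
Hypothesis Hlam1 : forall i, lam1 i = (complex.Re (lam1 i))%:C.
Hypothesis Hlam2 : forall i, lam2 i = (complex.Re (lam2 i))%:C.
Variable t : R.
Let e1 i := (expR (complex.Re (lam1 i) * t))%:C.
Let e2 i := (expR (complex.Re (lam2 i) * t))%:C.

Lemma ctens_F (z0 : GG G1 G2 -> C) (g : GG G1 G2) :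
  ctens (classical_sg chi1 lam1 t) (classical_sg chi2 lam2 t)
    (fun h => \sum_k z0 k * pchi chi1 chi2 k h) g
  = \sum_k (e1 k.1 * e2 k.2 * z0 k) * pchi chi1 chi2 k g.
Proof.
set f := fun h => \sum_k z0 k * pchi chi1 chi2 k h.
have Hz k : z0 k = (#|{: GG G1 G2}|%:R)^-1 * \sum_h f h * pchi chi1 chi2 (- k) h.
  rewrite (fourier_F (pchi_mul Hc1 Hc2) (pchi_sum Hc1 Hc2)) mulKf //.
  by rewrite pnatr_eq0 -lt0n; apply/card_gt0P; exists 0.
rewrite /ctens.
under eq_bigr do under eq_bigr do rewrite (csg_delta _ Hlam1) (csg_delta _ Hlam2).
have Hex : forall h1 h2, f (h1, h2) *
   (\sum_i e1 i * (#|G1|%:R^-1 * conjc (chi1 i h1)) * chi1 i g.1) *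
   (\sum_j e2 j * (#|G2|%:R^-1 * conjc (chi2 j h2)) * chi2 j g.2) =
   \sum_i \sum_j f (h1, h2) * (e1 i * (#|G1|%:R^-1 * conjc (chi1 i h1)) * chi1 i g.1) *
     (e2 j * (#|G2|%:R^-1 * conjc (chi2 j h2)) * chi2 j g.2).
  move=> h1 h2; rewrite [f _ * _]mulr_sumr mulr_suml; apply: eq_bigr => i _.
  by rewrite mulr_sumr.
under eq_bigr do under eq_bigr do rewrite Hex.
under eq_bigr do rewrite pull2.
rewrite pull2 sum_pair; apply: eq_bigr => i _; apply: eq_bigr => j _.
transitivity (e1 i * e2 j * (#|G1|%:R^-1 * #|G2|%:R^-1) * (chi1 i g.1 * chi2 j g.2) *
  \sum_h1 \sum_h2 f (h1, h2) * (chi1 (- i) h1 * chi2 (- j) h2)).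
  rewrite mulr_sumr; apply: eq_bigr => h1 _.
  rewrite mulr_sumr; apply: eq_bigr => h2 _.
  rewrite (ch_conj Hc1) (ch_conj Hc2); ring.
rewrite Hz sum_pair card_GG natrM invfM /pchi /=.
ring.
Qed.
End CT.


Section ReFacts.
Variable R : realType.
Local Notation C := (R[i]).

Lemma Re_le (z w : C) : z <= w -> complex.Re z <= complex.Re w.
Proof. by rewrite lecE => /andP[]. Qed.

Lemma Re_ge0 (z : C) : 0 <= z -> 0 <= complex.Re z.
Proof. exact: Re_le. Qed.

Lemma Re_gt0 (z : C) : 0 < z -> 0 < complex.Re z.
Proof. by rewrite ltcE => /andP[]. Qed.

Lemma Re_natM n (z : C) : complex.Re (n%:R * z) = n%:R * complex.Re z.
Proof.
have -> : (n%:R : C) = (n%:R)%:C by rewrite rmorph_nat.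
by rewrite mulrC ReM_realr mulrC.
Qed.

Lemma Re_le_norm (z : C) : complex.Re z <= complex.Re `|z|.
Proof.
apply: le_trans (real_ler_norm _) _; first exact: num_real.
by have := Re_le (normc_ge_Re z).
Qed.

Lemma conj_ge0_eq (z : C) : 0 <= z -> z^* = z.
Proof. by case: z => a b; rewrite lecE /= => /andP[/eqP -> _]; rewrite oppr0. Qed.

End ReFacts.

Lemma mainTheorem20_aux (R : realType) (d1 d2 : nat) (G1 G2 : finZmodType)
  (L1 : 'M[R[i]]_d1 -> 'M[R[i]]_d1) (L2 : 'M[R[i]]_d2 -> 'M[R[i]]_d2)
  (U1 : G1 -> 'M[R[i]]_d1) (lam1 : G1 -> R[i])
  (U2 : G2 -> 'M[R[i]]_d2) (lam2 : G2 -> R[i])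
  (chi1 : G1 -> G1 -> R[i]) (chi2 : G2 -> G2 -> R[i]) :
  liouvillian L1 -> unital L1 -> reversible L1 ->
  ac_unitary_eigenbasis L1 U1 lam1 ->
  liouvillian L2 -> unital L2 -> reversible L2 ->
  ac_unitary_eigenbasis L2 U2 lam2 ->
  character_iso chi1 -> character_iso chi2 ->
  forall t : R, 0 <= t ->
  (qnorm24 (suptens (expL L1 t) (expL L2 t))
     <= cnorm24 (ctens (classical_sg chi1 lam1 t) (classical_sg chi2 lam2 t)))%E.
Proof.
move=> HL1 _ Hrev1 HU1 HL2 _ Hrev2 HU2 Hc1 Hc2 t Ht.
set S := suptens (expL L1 t) (expL L2 t).
set A := ctens _ _.
pose D := (d1 * d2)%N.
pose W := Wt U1 U2.
have HD : (0 < D)%N by rewrite muln_gt0 (fam_d_gt0 HU1) (fam_d_gt0 HU2).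
have HDn : (D%:R : R) != 0 by rewrite pnatr_eq0 -lt0n.
pose E1 i := (expR (complex.Re (lam1 i) * t))%:C.
pose E2 i := (expR (complex.Re (lam2 i) * t))%:C.
pose e (k : GG G1 G2) := E1 k.1 * E2 k.2.
have He0 k : 0 <= e k by rewrite /e /E1 /E2 -rmorphM /= ler0c mulr_ge0 ?expR_ge0.
apply: ge_ereal_sup => _ [X HX0 <-].
pose x k := hs_inner (W k) X / D%:R.
have HSX : S X = \sum_k (e k * x k) *: W k.
  by rewrite /S (suptens_formula HL1 Hrev1 HU1 HL2 Hrev2 HU2) sum_pair.
case: (boolP [exists k, x k != 0]) => [/existsP [k0 Hk0] | /existsPn Hx0]; last first.
  have -> : S X = 0.
    rewrite HSX big1 // => k _; have := Hx0 k; rewrite negbK => /eqP ->.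
    by rewrite mulr0 scale0r.
  have -> : qnorm4 (0 : 'M[R[i]]_(d1 * d2)) = 0.
    rewrite /qnorm4 (_ : adjmx 0 = 0); last by apply/matrixP => i j; rewrite !mxE conjc0.
    by rewrite !mul0mx mxtrace0 /= mulr0 powR0 // invr_eq0 pnatr_eq0.
  rewrite mul0r; apply: le_ereal_sup_tmp.
  pose f1 : G1 * G2 -> R[i] := fun=> 1.
  exists ((cnorm 4 (A f1) / cnorm 2 f1)%:E).
    exists f1 => //.
    by move=> /(congr1 (fun f => f (0, 0))) /eqP; rewrite oner_eq0.
  by rewrite lee_fin divr_ge0 ?powR_ge0.
have Horth := Wt_orth HU1 HU2.
have HT := Wt_tr4 HU1 HU2.
pose f : G1 * G2 -> R[i] := fun h => \sum_(k : GG G1 G2) `|x k| * pchi chi1 chi2 k h.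
have HAf : A f = fun g => \sum_(k : GG G1 G2) (e k * `|x k|) * pchi chi1 chi2 k g.
  apply: funext => g.
  exact: (ctens_F Hc1 Hc2 (fam_lam_real Hrev1 HU1) (fam_lam_real Hrev2 HU2) t (fun k => `|x k|) g).
pose Nx := \sum_k `|x k| ^+ 2.
have HNx : 0 < complex.Re Nx.
  apply: Re_gt0; rewrite /Nx (bigD1 k0) //=.
  apply: ltr_pwDl; first by rewrite exprn_gt0 // normr_gt0.
  by apply: sumr_ge0 => k _; rewrite exprn_ge0.
have HG0 : (#|{: GG G1 G2}|%:R : R[i]) != 0.
  by rewrite pnatr_eq0 -lt0n; apply/card_gt0P; exists 0.
have HG0' : (#|{: GG G1 G2}|%:R : R) != 0.
  by rewrite pnatr_eq0 -lt0n; apply/card_gt0P; exists 0.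
have Hf2 : \sum_(g : G1 * G2) `|f g| ^+ 2 = #|{: GG G1 G2}|%:R * Nx.
  have := two_norm (pchi_mul Hc1 Hc2) (pchi_conj Hc1 Hc2) (pchi_sum Hc1 Hc2)
    (fun k => `|x k|).
  move=> ->; congr (_ * _); apply: eq_bigr => k _; by rewrite normr_id.
have Hc2eq : cnorm 2 f = (complex.Re Nx) `^ (2%:R^-1).
  rewrite /cnorm; congr (_ `^ _).
  by rewrite -Re_sum Hf2 Re_natM mulKf.
apply: le_ereal_sup_tmp; exists ((cnorm 4 (A f) / cnorm 2 f)%:E).
  exists f => // Hf; move: HNx; rewrite lt_def => /andP[/eqP HN _]; apply: HN.
  have : \sum_(g : G1 * G2) `|f g| ^+ 2 = 0.
    by rewrite Hf; apply: big1 => g _; rewrite normr0 expr0n.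
  by rewrite Hf2 => /eqP; rewrite mulf_eq0 (negbTE HG0) /= => /eqP ->.
rewrite lee_fin.
pose y k := e k * x k.
pose Sum4 := \sum_a \sum_b \sum_c \sum_e'
     (((b - a + (e' - c) == 0)%:R : R[i]) * (`|y a| * `|y b| * `|y c| * `|y e'|)).
have Hy k : `|y k| = e k * `|x k| by rewrite /y normrM ger0_norm.
have Hz k : (e k * `|x k|)^* = e k * `|x k| by apply: conj_ge0_eq; rewrite mulr_ge0.
have Hf4 : \sum_(g : G1 * G2) `|A f g| ^+ 4 = #|{: GG G1 G2}|%:R * Sum4.
  rewrite HAf.
  have := four_norm (pchi_mul Hc1 Hc2) (pchi_conj Hc1 Hc2) (pchi_sum Hc1 Hc2)
    (fun k => e k * `|x k|).
  move=> ->; rewrite /Sum4; apply: f_equal.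
  apply: eq_bigr => a _; apply: eq_bigr => b _; apply: eq_bigr => c _; apply: eq_bigr => e' _.
  congr (_ * (_ * _ * _ * _)).
  - exact: (etrans (Hz a) (esym (Hy a))).
  - exact: (esym (Hy b)).
  - exact: (etrans (Hz c) (esym (Hy c))).
  - exact: (esym (Hy e')).
have Hc4eq : cnorm 4 (A f) = (complex.Re Sum4) `^ (4%:R^-1).
  rewrite /cnorm; congr (_ `^ _).
  by rewrite -Re_sum Hf4 Re_natM mulKf.
have HY : S X = \sum_k y k *: W k by rewrite HSX.
have HDC : (D%:R : R[i]) != 0 by rewrite pnatr_eq0 -lt0n.
have Hq4 := q4_bound HT y.
have Hq4' : (D%:R)^-1 * complex.Re (\tr ((adjmx (S X) *m S X) *m (adjmx (S X) *m S X)))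
    <= complex.Re Sum4.
  rewrite HY.
  have h := Re_le Hq4; rewrite Re_natM in h.
  have h2 := le_trans (Re_le_norm _) h.
  rewrite -[X in _ <= X](mulKf HDn).
  apply: ler_wpM2l; first by rewrite invr_ge0 ler0n.
  exact: h2.
have Hq4pos : 0 <= (D%:R)^-1 * complex.Re (\tr ((adjmx (S X) *m S X) *m (adjmx (S X) *m S X))).
  apply: mulr_ge0; first by rewrite invr_ge0 ler0n.
  apply: Re_ge0.
  have HP : adjmx (adjmx (S X) *m S X) = adjmx (S X) *m S X by rewrite adjmxM adjmxK.
  have := hs_self_ge0 (adjmx (S X) *m S X); by rewrite /hs_inner HP.
have Hq2 : complex.Re Nx <= (D%:R)^-1 * complex.Re (\tr (adjmx X *m X)).
  have h := Re_le (bessel Horth HD X); rewrite Re_natM in h.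
  apply: le_trans (_ : complex.Re Nx <= (D%:R)^-1 * (D%:R * complex.Re Nx)) _.
    by rewrite mulKf.
  apply: ler_wpM2l; first by rewrite invr_ge0 ler0n.
  exact: h.
rewrite Hc2eq Hc4eq /qnorm4 /qnorm2.
have H4 : 0 <= 4^-1 :> R by rewrite invr_ge0.
have H2 : 0 <= 2^-1 :> R by rewrite invr_ge0.
have h1 := ge0_ler_powR H4 Hq4pos (le_trans Hq4pos Hq4') Hq4'.
have h2 := ge0_ler_powR H2 (ltW HNx) (le_trans (ltW HNx) Hq2) Hq2.
have hc : 0 < complex.Re Nx `^ 2^-1 := powR_gt0 _ HNx.
apply: le_trans (ler_wpM2r _ h1) _; first by rewrite invr_ge0 powR_ge0.
apply: ler_wpM2l; first exact: powR_ge0.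
rewrite lef_pV2 ?posrE //; exact: lt_le_trans hc h2.
Qed.


Close Scope classical_set_scope.
Close Scope complex_scope.

Theorem mainTheorem20 (R : realType) (d1 d2 : nat) (G1 G2 : finZmodType)
  (L1 : 'M[R[i]]_d1 -> 'M[R[i]]_d1) (L2 : 'M[R[i]]_d2 -> 'M[R[i]]_d2)
  (U1 : G1 -> 'M[R[i]]_d1) (lam1 : G1 -> R[i])
  (U2 : G2 -> 'M[R[i]]_d2) (lam2 : G2 -> R[i])
  (chi1 : G1 -> G1 -> R[i]) (chi2 : G2 -> G2 -> R[i]) :
  liouvillian L1 -> unital L1 -> reversible L1 ->
  ac_unitary_eigenbasis L1 U1 lam1 ->
  liouvillian L2 -> unital L2 -> reversible L2 ->
  ac_unitary_eigenbasis L2 U2 lam2 ->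
  character_iso chi1 -> character_iso chi2 ->
  forall t : R, 0 <= t ->
  (qnorm24 (suptens (expL L1 t) (expL L2 t))
     <= cnorm24 (ctens (classical_sg chi1 lam1 t) (classical_sg chi2 lam2 t)))%E.
Proof. exact: mainTheorem20_aux. Qed.
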